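(* Let $e,f\in\mathsf{Exp}/{\sim}$ and $v_x\in V$. For all $n\in\mathbb{N}$, if $e\sim^{(n)}f$ then $\mu v_x.e\sim^{(n)}\mu v_x.f$.
   Context: Fix variables $V=\{v_1,v_2,\dots\}$ and letters $\Sigma$. Expressions: $e\in\mathsf{Exp}::=0\mid v\ (v\in V)\mid a.e\mid e+f\mid\mu v.e$ ($\mu v$ binds $v$); $e[\vec f/\vec v]$ is simultaneous capture-avoiding substitution. The prechart $(\mathsf{Exp},\partial)$: least relations with $a.e\xrightarrow{a}e$; $v\rhd v$; $e+f$ has all transitions and outputs of $e$ and of $f$; $\mu w.e\rhd v$ if $e\rhd v$, $v\ne w$; $\mu v.e\xrightarrow{a}e'[\mu v.e/v]$ if $e\xrightarrow{a}e'$. Bisimilarity $\sim$ is a congruence for all operations including substitution; $\mathsf{Exp}/{\sim}$ is a prechart via $[e]\xrightarrow{a}[e']$ iff $e\xrightarrow{a}e'$, $[e]\rhd v$ iff $e\rhd v$. Stratified bisimilarity on it: $x\sim^{(0)}y$ always; $x\sim^{(k+1)}y$ iff $x,y$ have the same outputs, every $x\xrightarrow{a}x'$ is matched by some $y\xrightarrow{a}y'$ with $x'\sim^{(k)}y'$, and symmetrically. *)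

(* Defs.v *)
From Stdlib Require Import List Arith.
Import ListNotations.
Set Implicit Arguments.

Section Exp.
Variable Sigma : Type.

Inductive Exp : Type :=
| Zero : Exp
| Var : nat -> Exp
| Act : Sigma -> Exp -> Exp
| Plus : Exp -> Exp -> Exp
| Mu : nat -> Exp -> Exp.

Fixpoint fv (e : Exp) : list nat :=
  match e with
  | Zero => []
  | Var v => [v]
  | Act _ e => fv e
  | Plus e f => fv e ++ fv f
  | Mu w e => remove Nat.eq_dec w (fv e)
  end.

Definition fresh (l : list nat) : nat := S (fold_right Nat.max 0 l).

Fixpoint subst (s : nat -> Exp) (e : Exp) : Exp :=
  match e with
  | Zero => Zero
  | Var v => s v
  | Act a e => Act a (subst s e)
  | Plus e f => Plus (subst s e) (subst s f)
  | Mu w e =>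
      let avoid := flat_map (fun u => fv (s u)) (remove Nat.eq_dec w (fv e)) in
      let w' := if in_dec Nat.eq_dec w avoid then fresh (avoid ++ fv e) else w in
      Mu w' (subst (fun u => if Nat.eq_dec u w then Var w' else s u) e)
  end.

Definition subst1 (e : Exp) (g : Exp) (v : nat) : Exp :=
  subst (fun u => if Nat.eq_dec u v then g else Var u) e.

Inductive step : Exp -> Sigma -> Exp -> Prop :=
| step_act : forall a e, step (Act a e) a e
| step_plusl : forall e f a e', step e a e' -> step (Plus e f) a e'
| step_plusr : forall e f a f', step f a f' -> step (Plus e f) a f'
| step_mu : forall v e a e', step e a e' -> step (Mu v e) a (subst1 e' (Mu v e) v).

Inductive out : Exp -> nat -> Prop :=
| out_var : forall v, out (Var v) v
| out_plusl : forall e f v, out e v -> out (Plus e f) v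
| out_plusr : forall e f v, out f v -> out (Plus e f) v
| out_mu : forall w e v, out e v -> v <> w -> out (Mu w e) v.

Definition is_bisimulation (R : Exp -> Exp -> Prop) : Prop :=
  forall e f, R e f ->
    (forall v, out e v <-> out f v) /\
    (forall a e', step e a e' -> exists f', step f a f' /\ R e' f') /\
    (forall a f', step f a f' -> exists e', step e a e' /\ R e' f').

Definition bisim (e f : Exp) : Prop :=
  exists R, is_bisimulation R /\ R e f.

Definition QExp : Type := { X : Exp -> Prop | exists e, X = bisim e }.

Definition cls (e : Exp) : QExp := exist _ (bisim e) (ex_intro _ e eq_refl).

Definition qstep (X : QExp) (a : Sigma) (Y : QExp) : Prop :=
  exists e e', proj1_sig X = bisim e /\ proj1_sig Y = bisim e' /\ step e a e'.

Definition qout (X : QExp) (v : nat) : Prop :=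
  exists e, proj1_sig X = bisim e /\ out e v.

Fixpoint strat (n : nat) (X Y : QExp) : Prop :=
  match n with
  | O => True
  | S k =>
      (forall v, qout X v <-> qout Y v) /\
      (forall a X', qstep X a X' -> exists Y', qstep Y a Y' /\ strat k X' Y') /\
      (forall a Y', qstep Y a Y' -> exists X', qstep X a X' /\ strat k X' Y')
  end.

End Exp.

(* Main.v *)
Require Import Defs.
From Stdlib Require Import List Arith Lia.
Import ListNotations.

Section S.
Variable Sigma : Type.
Notation E := (Exp Sigma).
Notation V := (Var Sigma).

Definition avoidF (s : nat -> E) (w : nat) (e : E) : list nat :=
  flat_map (fun u => fv (s u)) (remove Nat.eq_dec w (fv e)).
Definition newv (s : nat -> E) (w : nat) (e : E) : nat :=
  if in_dec Nat.eq_dec w (avoidF s w e) then fresh (avoidF s w e ++ fv e) else w.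
Definition upd (s : nat -> E) (w w' : nat) : nat -> E :=
  fun u => if Nat.eq_dec u w then V w' else s u.

Lemma subst_Mu s w e :
  subst s (Mu w e) = Mu (newv s w e) (subst (upd s w (newv s w e)) e).
Proof. reflexivity. Qed.

Lemma max_ge l x : In x l -> x <= fold_right Nat.max 0 l.
Proof.
  induction l; simpl; intros H; [contradiction|].
  destruct H as [->|H]; [lia|]. specialize (IHl H). lia.
Qed.

Lemma fresh_notin l : ~ In (fresh l) l.
Proof. intros H. apply max_ge in H. unfold fresh in H. lia. Qed.

Lemma newv_ok s w e u y :
  In u (fv e) -> u <> w -> In y (fv (s u)) -> y <> newv s w e.
Proof.
  intros Hu Hw Hy.
  assert (Ha : In y (avoidF s w e)).
  { unfold avoidF. apply in_flat_map. exists u. split; auto. apply in_in_remove; auto. }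
  unfold newv. destruct (in_dec Nat.eq_dec w (avoidF s w e)).
  - intros ->. apply (fresh_notin (avoidF s w e ++ fv e)). apply in_or_app; auto.
  - intros ->. contradiction.
Qed.

Lemma out_fv (e : E) v : out e v -> In v (fv e).
Proof.
  induction 1; simpl; auto.
  - apply in_or_app; auto.
  - apply in_or_app; auto.
  - apply in_in_remove; auto.
Qed.

Lemma fv_subst s (e : E) y :
  In y (fv (subst s e)) -> exists u, In u (fv e) /\ In y (fv (s u)).
Proof.
  revert s. induction e as [|n|b e IHe|e1 IHe1 e2 IHe2|n e IHe]; intros s H.
  - contradiction.
  - exists n. simpl; auto.
  - simpl in *. auto.
  - simpl in *. apply in_app_or in H. destruct H as [H|H].
    + destruct (IHe1 s H) as (u & ? & ?). exists u; split; auto. apply in_or_app; auto.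
    + destruct (IHe2 s H) as (u & ? & ?). exists u; split; auto. apply in_or_app; auto.
  - rewrite subst_Mu in H. simpl in H.
    apply in_remove in H. destruct H as [H Hne].
    destruct (IHe _ H) as (u & Hu & Hy). unfold upd in Hy.
    destruct (Nat.eq_dec u n).
    + simpl in Hy. destruct Hy as [Heq|[]]. subst y. contradiction.
    + exists u. split; auto. simpl. apply in_in_remove; auto.
Qed.

Lemma step_fv (e : E) a e' : step e a e' -> forall y, In y (fv e') -> In y (fv e).
Proof.
  induction 1; intros y Hy; simpl in *; auto.
  - apply in_or_app; auto.
  - apply in_or_app; auto.
  - unfold subst1 in Hy. apply fv_subst in Hy. destruct Hy as (u & Hu & Hy).
    destruct (Nat.eq_dec u v).
    + exact Hy.
    + simpl in Hy. destruct Hy as [->|[]]. apply in_in_remove; auto.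
Qed.


Inductive EqE : E -> E -> Prop :=
| eqr x : EqE x x
| eqs x y : EqE x y -> EqE y x
| eqt x y z : EqE x y -> EqE y z -> EqE x z
| eqsub s t e f : EqE e f -> (forall u, In u (fv e) -> EqE (s u) (t u)) ->
    EqE (subst s e) (subst t f)
| eqid s e : (forall u, In u (fv e) -> s u = V u) -> EqE (subst s e) e
| eqcomp s t e : EqE (subst t (subst s e)) (subst (fun u => subst t (s u)) e).

Lemma eqsub1 s e f : EqE e f -> EqE (subst s e) (subst s f).
Proof. intros H. apply eqsub; auto using eqr. Qed.


Lemma out_plus_inv (e f : E) v : out (Plus e f) v -> out e v \/ out f v.
Proof. intros H; inversion H; subst; auto. Qed.
Lemma out_mu_inv (e : E) w v : out (Mu w e) v -> out e v /\ v <> w.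
Proof. intros H; inversion H; subst; auto. Qed.
Lemma out_var_inv u v : out (V u) v -> v = u.
Proof. intros H; inversion H; subst; auto. Qed.
Lemma out_zero_inv v : ~ out (Zero Sigma) v.
Proof. intros H; inversion H. Qed.
Lemma out_act_inv b (e : E) v : ~ out (Act b e) v.
Proof. intros H; inversion H. Qed.
Lemma step_plus_inv (e f : E) a x : step (Plus e f) a x -> step e a x \/ step f a x.
Proof. intros H; inversion H; subst; auto. Qed.
Lemma step_mu_inv (e : E) w a x : step (Mu w e) a x ->
  exists e', step e a e' /\ x = subst1 e' (Mu w e) w.
Proof. intros H; inversion H; subst; eauto. Qed.
Lemma step_act_inv b (e : E) a x : step (Act b e) a x -> a = b /\ x = e.
Proof. intros H; inversion H; subst; auto. Qed.
Lemma step_var_inv u a (x : E) : ~ step (V u) a x.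
Proof. intros H; inversion H. Qed.
Lemma step_zero_inv a (x : E) : ~ step (Zero Sigma) a x.
Proof. intros H; inversion H. Qed.
Lemma out_subst s (e : E) v :
  out (subst s e) v <-> exists u, out e u /\ out (s u) v.
Proof.
  revert s v. induction e as [|n|b e IHe|e1 IHe1 e2 IHe2|n e IHe]; intros s v.
  - simpl. split; [intros H; now apply out_zero_inv in H | intros (u & H & _); now apply out_zero_inv in H].
  - simpl. split.
    + intros H. exists n. split; auto. constructor.
    + intros (u & H1 & H2). apply out_var_inv in H1; subst; auto.
  - simpl. split; [intros H; now apply out_act_inv in H | intros (u & H & _); now apply out_act_inv in H].
  - simpl. split.
    + intros H. apply out_plus_inv in H. destruct H as [H|H].
      * apply IHe1 in H. destruct H as (u & ? & ?). exists u; split; auto. apply out_plusl; auto.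
      * apply IHe2 in H. destruct H as (u & ? & ?). exists u; split; auto. apply out_plusr; auto.
    + intros (u & H1 & H2). apply out_plus_inv in H1. destruct H1 as [H1|H1].
      * apply out_plusl. apply IHe1. eauto.
      * apply out_plusr. apply IHe2. eauto.
  - rewrite subst_Mu. split.
    + intros H. apply out_mu_inv in H. destruct H as [H Hv]. apply IHe in H. destruct H as (u & H1 & H2).
      unfold upd in H2. destruct (Nat.eq_dec u n).
      * apply out_var_inv in H2; subst. contradiction.
      * exists u. split; auto. constructor; auto.
    + intros (u & H1 & H2). apply out_mu_inv in H1. destruct H1 as [H1 Hu]. constructor.
      * apply IHe. exists u. split; auto. unfold upd. destruct (Nat.eq_dec u n); [contradiction|auto].
      * eapply newv_ok; eauto using out_fv.
Qed.

Lemma mu_calc s w e0 e0' x0 :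
  (forall y, In y (fv e0') -> In y (fv e0)) ->
  EqE x0 (subst (upd s w (newv s w e0)) e0') ->
  EqE (subst1 x0 (subst s (Mu w e0)) (newv s w e0)) (subst s (subst1 e0' (Mu w e0) w)).
Proof.
  intros Hfv Hx. unfold subst1.
  eapply eqt. { apply eqsub1. exact Hx. }
  eapply eqt. { apply eqcomp. }
  eapply eqt. 2: { apply eqs. apply eqcomp. }
  apply eqsub; [apply eqr|]. intros u Hu. unfold upd.
  destruct (Nat.eq_dec u w) as [->|Hne].
  - simpl. destruct (Nat.eq_dec (newv s w e0) (newv s w e0)); [apply eqr|congruence].
  - simpl. destruct (Nat.eq_dec u w); [contradiction|].
    apply eqid. intros y Hy. destruct (Nat.eq_dec y (newv s w e0)); auto.
    exfalso. apply (newv_ok s w e0 u y); auto.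
Qed.

Lemma subst1_fresh (x : E) g w : ~ In w (fv x) -> EqE (subst1 x g w) x.
Proof.
  intros H. unfold subst1. apply eqid. intros u Hu.
  destruct (Nat.eq_dec u w); [subst; contradiction|reflexivity].
Qed.

Lemma stepA s (e : E) a x : step (subst s e) a x ->
  (exists e', step e a e' /\ EqE x (subst s e')) \/
  (exists u x1, out e u /\ step (s u) a x1 /\ EqE x x1).
Proof.
  revert s x. induction e as [|n|b e IHe|e1 IHe1 e2 IHe2|n e IHe]; intros s x H.
  - simpl in H. now apply step_zero_inv in H.
  - simpl in H. right. exists n, x. split; [constructor|split; auto using eqr].
  - simpl in H. apply step_act_inv in H. destruct H as [-> ->].
    left. exists e. split; [constructor|apply eqr].
  - simpl in H. apply step_plus_inv in H. destruct H as [H|H].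
    + destruct (IHe1 _ _ H) as [(e' & H1 & H2)|(u & x1 & H1 & H2 & H3)].
      * left. exists e'. split; auto. apply step_plusl; auto.
      * right. exists u, x1. split; auto. apply out_plusl; auto.
    + destruct (IHe2 _ _ H) as [(e' & H1 & H2)|(u & x1 & H1 & H2 & H3)].
      * left. exists e'. split; auto. apply step_plusr; auto.
      * right. exists u, x1. split; auto. apply out_plusr; auto.
  - rewrite subst_Mu in H. apply step_mu_inv in H. destruct H as (x0 & Hx0 & ->).
    rewrite <- subst_Mu.
    destruct (IHe _ _ Hx0) as [(e' & H1 & H2)|(u & x1 & H1 & H2 & H3)].
    + left. exists (subst1 e' (Mu n e) n). split; [constructor; auto|].
      apply mu_calc; auto. intros y Hy. eapply step_fv; eauto.
    + unfold upd in H2. destruct (Nat.eq_dec u n) as [_|Hne].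
      * now apply step_var_inv in H2.
      * right. exists u, x1. split; [constructor; auto|split; auto].
        eapply eqt. { apply eqsub1. exact H3. }
        apply subst1_fresh. intros Hin.
        apply (newv_ok s n e u (newv s n e)); auto using out_fv.
        eapply step_fv; eauto.
Qed.

Lemma stepB s (e : E) a e' : step e a e' ->
  exists x, step (subst s e) a x /\ EqE x (subst s e').
Proof.
  intros H. revert s. induction H; intros s.
  - exists (subst s e). split; [constructor|apply eqr].
  - destruct (IHstep s) as (x & H1 & H2). exists x. split; auto. simpl. apply step_plusl; auto.
  - destruct (IHstep s) as (x & H1 & H2). exists x. split; auto. simpl. apply step_plusr; auto.
  - destruct (IHstep (upd s v (newv s v e))) as (x0 & H1 & H2).
    exists (subst1 x0 (subst s (Mu v e)) (newv s v e)). split.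
    + rewrite subst_Mu. constructor. exact H1.
    + apply mu_calc; auto. intros y Hy. eapply step_fv; eauto.
Qed.

Lemma stepC s (e : E) u a x : out e u -> step (s u) a x ->
  exists x', step (subst s e) a x' /\ EqE x' x.
Proof.
  intros H. revert s x. induction H; intros s x Hs.
  - exists x. split; auto using eqr.
  - destruct (IHout s x Hs) as (x' & H1 & H2). exists x'. split; auto. simpl. apply step_plusl; auto.
  - destruct (IHout s x Hs) as (x' & H1 & H2). exists x'. split; auto. simpl. apply step_plusr; auto.
  - assert (Hs' : step (upd s w (newv s w e) v) a x).
    { unfold upd. destruct (Nat.eq_dec v w); [contradiction|exact Hs]. }
    destruct (IHout _ _ Hs') as (x0 & H1 & H2).
    exists (subst1 x0 (subst s (Mu w e)) (newv s w e)). split.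
    + rewrite subst_Mu. constructor. exact H1.
    + eapply eqt. { apply eqsub1. exact H2. }
      apply subst1_fresh. intros Hin.
      apply (newv_ok s w e v (newv s w e)); auto using out_fv.
      eapply step_fv; eauto.
Qed.

Definition Psim (x y : E) : Prop :=
  (forall v, out x v <-> out y v) /\
  (forall a x', step x a x' -> exists y', step y a y' /\ EqE x' y') /\
  (forall a y', step y a y' -> exists x', step x a x' /\ EqE x' y').

Lemma eqe_psim x y : EqE x y -> Psim x y.
Proof.
  induction 1 as [x|x y _ [Ho [Hf Hb]]|x y z _ [Ho1 [Hf1 Hb1]] _ [Ho2 [Hf2 Hb2]]
                 |s t e f Hef [Ho [Hf Hb]] Hst IHst|s e Hid|s t e].
  - split; [tauto|split].
    + intros a x' H. exists x'. split; auto using eqr.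
    + intros a x' H. exists x'. split; auto using eqr.
  - split; [intros v; rewrite Ho; tauto|split].
    + intros a x' H. destruct (Hb a x' H) as (y' & ? & ?). exists y'. split; auto using eqs.
    + intros a x' H. destruct (Hf a x' H) as (y' & ? & ?). exists y'. split; auto using eqs.
  - split; [intros v; rewrite Ho1, Ho2; tauto|split].
    + intros a x' H. destruct (Hf1 a x' H) as (y' & H1 & H2).
      destruct (Hf2 a y' H1) as (z' & H3 & H4). exists z'. split; eauto using eqt.
    + intros a z' H. destruct (Hb2 a z' H) as (y' & H1 & H2).
      destruct (Hb1 a y' H1) as (x' & H3 & H4). exists x'. split; eauto using eqt.
  - split; [|split].
    + intros v. rewrite !out_subst. split.
      * intros (u & H1 & H2). exists u. split; [apply Ho; auto|].
        apply (proj1 (IHst u (out_fv _ _ H1))); auto.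
      * intros (u & H1 & H2). exists u. apply Ho in H1. split; auto.
        apply (proj1 (IHst u (out_fv _ _ H1))); auto.
    + intros a x' H. destruct (stepA _ _ _ _ H) as [(e' & H1 & H2)|(u & x1 & H1 & H2 & H3)].
      * destruct (Hf _ _ H1) as (f' & H4 & H5).
        destruct (stepB t _ _ _ H4) as (y' & H6 & H7). exists y'. split; auto.
        eapply eqt. { exact H2. } eapply eqt. 2: { apply eqs. exact H7. }
        apply eqsub; auto. intros u Hu. apply Hst. eapply step_fv; eauto.
      * destruct (proj1 (proj2 (IHst u (out_fv _ _ H1))) _ _ H2) as (y1 & H4 & H5).
        assert (Hfu : out f u) by (apply Ho; auto).
        destruct (stepC t _ _ _ _ Hfu H4) as (y' & H6 & H7). exists y'. split; auto.
        eapply eqt. { exact H3. } eapply eqt. { exact H5. } apply eqs. exact H7.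
    + intros a y' H. destruct (stepA _ _ _ _ H) as [(f' & H1 & H2)|(u & y1 & H1 & H2 & H3)].
      * destruct (Hb _ _ H1) as (e' & H4 & H5).
        destruct (stepB s _ _ _ H4) as (x' & H6 & H7). exists x'. split; auto.
        eapply eqt. { exact H7. } eapply eqt. 2: { apply eqs. exact H2. }
        apply eqsub; auto. intros u Hu. apply Hst. eapply step_fv; eauto.
      * assert (Heu : out e u) by (apply Ho; auto).
        destruct (proj2 (proj2 (IHst u (out_fv _ _ Heu))) _ _ H2) as (x1 & H4 & H5).
        destruct (stepC s _ _ _ _ Heu H4) as (x' & H6 & H7). exists x'. split; auto.
        eapply eqt. { exact H7. } eapply eqt. { exact H5. } apply eqs. exact H3.
  - split; [|split].
    + intros v. rewrite out_subst. split.
      * intros (u & H1 & H2). rewrite (Hid u (out_fv _ _ H1)) in H2.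
        apply out_var_inv in H2. subst. auto.
      * intros H. exists v. split; auto. rewrite (Hid v (out_fv _ _ H)). constructor.
    + intros a x' H. destruct (stepA _ _ _ _ H) as [(e' & H1 & H2)|(u & x1 & H1 & H2 & H3)].
      * exists e'. split; auto. eapply eqt. { exact H2. } apply eqid.
        intros u Hu. apply Hid. eapply step_fv; eauto.
      * rewrite (Hid u (out_fv _ _ H1)) in H2. now apply step_var_inv in H2.
    + intros a e' H. destruct (stepB s _ _ _ H) as (x' & H1 & H2). exists x'. split; auto.
      eapply eqt. { exact H2. } apply eqid. intros u Hu. apply Hid. eapply step_fv; eauto.
  - split; [|split].
    + intros v. rewrite !out_subst. split.
      * intros (u' & H1 & H2). apply out_subst in H1. destruct H1 as (u & H3 & H4).
        exists u. split; auto. apply out_subst. eauto.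
      * intros (u & H1 & H2). apply out_subst in H2. destruct H2 as (u' & H3 & H4).
        exists u'. split; auto. apply out_subst. eauto.
    + intros a x' H. destruct (stepA _ _ _ _ H) as [(z & H1 & H2)|(u' & x1 & H1 & H2 & H3)].
      * destruct (stepA _ _ _ _ H1) as [(e' & H4 & H5)|(u & z1 & H4 & H5 & H6)].
        -- destruct (stepB (fun u => subst t (s u)) _ _ _ H4) as (y' & H6 & H7).
           exists y'. split; auto.
           eapply eqt. { exact H2. } eapply eqt. { apply eqsub1. exact H5. }
           eapply eqt. { apply eqcomp. } apply eqs. exact H7.
        -- destruct (stepB t _ _ _ H5) as (y1 & H7 & H8).
           destruct (stepC (fun u => subst t (s u)) _ _ _ _ H4 H7) as (y' & H9 & H10).
           exists y'. split; auto.
           eapply eqt. { exact H2. } eapply eqt. { apply eqsub1. exact H6. }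
           eapply eqt. { apply eqs. exact H8. } apply eqs. exact H10.
      * apply out_subst in H1. destruct H1 as (u & H4 & H5).
        destruct (stepC t _ _ _ _ H5 H2) as (y1 & H6 & H7).
        destruct (stepC (fun u => subst t (s u)) _ _ _ _ H4 H6) as (y' & H8 & H9).
        exists y'. split; auto.
        eapply eqt. { exact H3. } eapply eqt. { apply eqs. exact H7. } apply eqs. exact H9.
    + intros a y' H. destruct (stepA _ _ _ _ H) as [(e' & H1 & H2)|(u & y1 & H1 & H2 & H3)].
      * destruct (stepB s _ _ _ H1) as (z & H4 & H5).
        destruct (stepB t _ _ _ H4) as (x' & H6 & H7).
        exists x'. split; auto.
        eapply eqt. { exact H7. } eapply eqt. { apply eqsub1. exact H5. }
        eapply eqt. { apply eqcomp. } apply eqs. exact H2.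
      * destruct (stepA _ _ _ _ H2) as [(z & H4 & H5)|(u' & y2 & H4 & H5 & H6)].
        -- destruct (stepC s _ _ _ _ H1 H4) as (z2 & H7 & H8).
           destruct (stepB t _ _ _ H7) as (x' & H9 & H10).
           exists x'. split; auto.
           eapply eqt. { exact H10. } eapply eqt. { apply eqsub1. exact H8. }
           eapply eqt. { apply eqs. exact H5. } apply eqs. exact H3.
        -- assert (Ho : out (subst s e) u') by (apply out_subst; eauto).
           destruct (stepC t _ _ _ _ Ho H5) as (x' & H7 & H8).
           exists x'. split; auto.
           eapply eqt. { exact H8. } eapply eqt. { apply eqs. exact H6. } apply eqs. exact H3.
Qed.

Fixpoint sn (k : nat) (x y : E) : Prop :=
  match k with
  | O => True
  | S k =>
      (forall v, out x v <-> out y v) /\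
      (forall a x', step x a x' -> exists y', step y a y' /\ sn k x' y') /\
      (forall a y', step y a y' -> exists x', step x a x' /\ sn k x' y')
  end.

Lemma sn_sym k x y : sn k x y -> sn k y x.
Proof.
  revert x y; induction k; simpl; auto. intros x y (Ho & Hf & Hb).
  split; [intros v; rewrite Ho; tauto|split].
  - intros a y' H. destruct (Hb a y' H) as (x' & ? & ?). eauto.
  - intros a x' H. destruct (Hf a x' H) as (y' & ? & ?). eauto.
Qed.

Lemma sn_trans k x y z : sn k x y -> sn k y z -> sn k x z.
Proof.
  revert x y z; induction k; simpl; auto. intros x y z (Ho1 & Hf1 & Hb1) (Ho2 & Hf2 & Hb2).
  split; [intros v; rewrite Ho1; auto|split].
  - intros a x' H. destruct (Hf1 a x' H) as (y' & H1 & H2).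
    destruct (Hf2 a y' H1) as (z' & H3 & H4). eauto.
  - intros a z' H. destruct (Hb2 a z' H) as (y' & H1 & H2).
    destruct (Hb1 a y' H1) as (x' & H3 & H4). eauto.
Qed.

Lemma sn_down k x y : sn (S k) x y -> sn k x y.
Proof.
  revert x y; induction k; intros x y; [simpl; auto|].
  intros (Ho & Hf & Hb). split; [exact Ho|split].
  - intros a x' H. destruct (Hf a x' H) as (y' & ? & ?). eauto.
  - intros a y' H. destruct (Hb a y' H) as (x' & ? & ?). eauto.
Qed.

Lemma eqe_sn k x y : EqE x y -> sn k x y.
Proof.
  revert x y; induction k; intros x y H; simpl; auto.
  destruct (eqe_psim _ _ H) as (Ho & Hf & Hb). split; [exact Ho|split].
  - intros a x' H1. destruct (Hf a x' H1) as (y' & ? & ?). eauto.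
  - intros a y' H1. destruct (Hb a y' H1) as (x' & ? & ?). eauto.
Qed.

Lemma sn_subst k e f s t : sn k e f -> (forall u, sn k (s u) (t u)) ->
  sn k (subst s e) (subst t f).
Proof.
  revert e f s t; induction k; intros e f s t Hef Hst; simpl; auto.
  destruct Hef as (Ho & Hf & Hb).
  assert (Hst' : forall u, sn k (s u) (t u)) by (intros; apply sn_down; auto).
  split; [|split].
  - intros v. rewrite !out_subst. split.
    + intros (u & H1 & H2). exists u. split; [apply Ho; auto|]. apply (proj1 (Hst u)); auto.
    + intros (u & H1 & H2). exists u. split; [apply Ho; auto|]. apply (proj1 (Hst u)); auto.
  - intros a x' H. destruct (stepA _ _ _ _ H) as [(e' & H1 & H2)|(u & x1 & H1 & H2 & H3)].
    + destruct (Hf _ _ H1) as (f' & H4 & H5).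
      destruct (stepB t _ _ _ H4) as (y' & H6 & H7). exists y'. split; auto.
      eapply sn_trans. { apply eqe_sn. exact H2. }
      eapply sn_trans. { apply IHk. exact H5. exact Hst'. }
      apply eqe_sn. apply eqs. exact H7.
    + destruct (proj1 (proj2 (Hst u)) _ _ H2) as (y1 & H4 & H5).
      assert (Hfu : out f u) by (apply Ho; auto).
      destruct (stepC t _ _ _ _ Hfu H4) as (y' & H6 & H7). exists y'. split; auto.
      eapply sn_trans. { apply eqe_sn. exact H3. }
      eapply sn_trans. { exact H5. } apply eqe_sn. apply eqs. exact H7.
  - intros a y' H. destruct (stepA _ _ _ _ H) as [(f' & H1 & H2)|(u & y1 & H1 & H2 & H3)].
    + destruct (Hb _ _ H1) as (e' & H4 & H5).
      destruct (stepB s _ _ _ H4) as (x' & H6 & H7). exists x'. split; auto.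
      eapply sn_trans. { apply eqe_sn. exact H7. }
      eapply sn_trans. { apply IHk. exact H5. exact Hst'. }
      apply eqe_sn. apply eqs. exact H2.
    + assert (Heu : out e u) by (apply Ho; auto).
      destruct (proj2 (proj2 (Hst u)) _ _ H2) as (x1 & H4 & H5).
      destruct (stepC s _ _ _ _ Heu H4) as (x' & H6 & H7). exists x'. split; auto.
      eapply sn_trans. { apply eqe_sn. exact H7. }
      eapply sn_trans. { exact H5. } apply eqe_sn. apply eqs. exact H3.
Qed.

Lemma sn_refl k x : sn k x x.
Proof. apply eqe_sn. apply eqr. Qed.

Lemma sn_mu n v e f : sn n e f -> sn n (Mu v e) (Mu v f).
Proof.
  revert e f; induction n; intros e f H; simpl; auto.
  destruct H as (Ho & Hf & Hb).
  assert (Hsub : forall x y, sn n x y ->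
     sn n (subst1 x (Mu v e) v) (subst1 y (Mu v f) v)).
  { intros x y Hxy. unfold subst1. apply sn_subst; auto.
    intros u. destruct (Nat.eq_dec u v).
    - apply IHn. apply sn_down. split; auto.
    - apply sn_refl. }
  split; [|split].
  - intros u. split; intros H; apply out_mu_inv in H; destruct H as [H1 H2];
      constructor; auto; apply Ho; auto.
  - intros a x' H. apply step_mu_inv in H. destruct H as (e' & H1 & ->).
    destruct (Hf _ _ H1) as (f' & H2 & H3). eexists. split; [constructor; exact H2|]. auto.
  - intros a y' H. apply step_mu_inv in H. destruct H as (f' & H1 & ->).
    destruct (Hb _ _ H1) as (e' & H2 & H3). eexists. split; [constructor; exact H2|]. auto.
Qed.

Lemma bisim_refl (x : E) : bisim x x.
Proof.
  exists (fun a b => a = b). split; auto.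
  intros e f ->. split; [tauto|split; intros; eauto].
Qed.

Lemma bisim_sym (x y : E) : bisim x y -> bisim y x.
Proof.
  intros (R & HR & Hxy). exists (fun a b => R b a). split; auto.
  intros e f H. destruct (HR f e H) as (Ho & Hf & Hb).
  split; [intros v; rewrite Ho; tauto|split].
  - intros a e' H1. destruct (Hb a e' H1) as (f' & ? & ?). eauto.
  - intros a f' H1. destruct (Hf a f' H1) as (e' & ? & ?). eauto.
Qed.

Lemma bisim_unfold (x y : E) : bisim x y ->
  (forall v, out x v <-> out y v) /\
  (forall a x', step x a x' -> exists y', step y a y' /\ bisim x' y') /\
  (forall a y', step y a y' -> exists x', step x a x' /\ bisim x' y').
Proof.
  intros (R & HR & Hxy). destruct (HR x y Hxy) as (Ho & Hf & Hb).
  split; [exact Ho|split].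
  - intros a x' H. destruct (Hf a x' H) as (y' & ? & ?). exists y'. split; auto. exists R; auto.
  - intros a y' H. destruct (Hb a y' H) as (x' & ? & ?). exists x'. split; auto. exists R; auto.
Qed.

Lemma bisim_sn k (x y : E) : bisim x y -> sn k x y.
Proof.
  revert x y; induction k; intros x y H; simpl; auto.
  destruct (bisim_unfold _ _ H) as (Ho & Hf & Hb). split; [exact Ho|split].
  - intros a x' H1. destruct (Hf a x' H1) as (y' & ? & ?). eauto.
  - intros a y' H1. destruct (Hb a y' H1) as (x' & ? & ?). eauto.
Qed.

Lemma eqpred_bisim (e e1 : E) : bisim e = bisim e1 -> bisim e e1.
Proof. intros H. rewrite H. apply bisim_refl. Qed.

Lemma bridge n : forall (X Y : QExp Sigma) e f,
  proj1_sig X = bisim e -> proj1_sig Y = bisim f -> (strat n X Y <-> sn n e f).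
Proof.
  induction n; intros X Y e f HX HY; simpl; [tauto|]. split.
  - intros (Ho & Hf & Hb). split; [|split].
    + intros v. split; intros H.
      * destruct (proj1 (Ho v) (ex_intro _ e (conj HX H))) as (f1 & H1 & H2).
        rewrite HY in H1. apply eqpred_bisim in H1.
        apply (proj1 (bisim_unfold _ _ H1)). exact H2.
      * destruct (proj2 (Ho v) (ex_intro _ f (conj HY H))) as (e1 & H1 & H2).
        rewrite HX in H1. apply eqpred_bisim in H1.
        apply (proj1 (bisim_unfold _ _ H1)). exact H2.
    + intros a e' H.
      assert (Hq : qstep X a (cls e')) by (exists e, e'; auto).
      destruct (Hf _ _ Hq) as (Y' & (f1 & f1' & H1 & H2 & H3) & H4).
      rewrite HY in H1. apply eqpred_bisim in H1.
      destruct (proj2 (proj2 (bisim_unfold _ _ H1)) _ _ H3) as (f2 & H5 & H6).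
      exists f2. split; auto.
      apply (IHn (cls e') Y' e' f1' eq_refl H2) in H4.
      eapply sn_trans. { exact H4. } apply sn_sym. apply bisim_sn. exact H6.
    + intros a f' H.
      assert (Hq : qstep Y a (cls f')) by (exists f, f'; auto).
      destruct (Hb _ _ Hq) as (X' & (e1 & e1' & H1 & H2 & H3) & H4).
      rewrite HX in H1. apply eqpred_bisim in H1.
      destruct (proj2 (proj2 (bisim_unfold _ _ H1)) _ _ H3) as (e2 & H5 & H6).
      exists e2. split; auto.
      apply (IHn X' (cls f') e1' f' H2 eq_refl) in H4.
      eapply sn_trans. { apply bisim_sn. exact H6. } exact H4.
  - intros (Ho & Hf & Hb). split; [|split].
    + intros v. split.
      * intros (e1 & H1 & H2). rewrite HX in H1. apply eqpred_bisim in H1.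
        exists f. split; auto. apply Ho. apply (proj1 (bisim_unfold _ _ H1)). exact H2.
      * intros (f1 & H1 & H2). rewrite HY in H1. apply eqpred_bisim in H1.
        exists e. split; auto. apply Ho. apply (proj1 (bisim_unfold _ _ H1)). exact H2.
    + intros a X' (e1 & e1' & H1 & H2 & H3).
      rewrite HX in H1. apply eqpred_bisim in H1.
      destruct (proj2 (proj2 (bisim_unfold _ _ H1)) _ _ H3) as (e2 & H5 & H6).
      destruct (Hf _ _ H5) as (f2 & H7 & H8).
      exists (cls f2). split; [exists f, f2; auto|].
      apply (IHn X' (cls f2) e1' f2 H2 eq_refl).
      eapply sn_trans. { apply sn_sym. apply bisim_sn. exact H6. } exact H8.
    + intros a Y' (f1 & f1' & H1 & H2 & H3).
      rewrite HY in H1. apply eqpred_bisim in H1.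
      destruct (proj2 (proj2 (bisim_unfold _ _ H1)) _ _ H3) as (f2 & H5 & H6).
      destruct (Hb _ _ H5) as (e2 & H7 & H8).
      exists (cls e2). split; [exists e, e2; auto|].
      apply (IHn (cls e2) Y' e2 f1' eq_refl H2).
      eapply sn_trans. { exact H8. } apply bisim_sn. exact H6.
Qed.

End S.

Theorem mainTheorem13 (Sigma : Type) (e f : Exp Sigma) (vx : nat) :
  forall n : nat, strat n (cls e) (cls f) -> strat n (cls (Mu vx e)) (cls (Mu vx f)).
Proof.
  intros n H.
  apply (bridge Sigma n (cls (Mu vx e)) (cls (Mu vx f)) (Mu vx e) (Mu vx f) eq_refl eq_refl).
  apply sn_mu. apply (bridge Sigma n (cls e) (cls f) e f eq_refl eq_refl). exact H.
Qed.
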